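(* Let $J_1\in\mathbb{R}$, $J_2>0$, $T>0$, $\beta=1/T$, $a=e^{J_1\beta}$, $b=e^{J_2\beta}$, and $T_c=\frac{2J_2}{\ln 3}$. Consider the fixed points of $F$ lying in $M_1$ (called paramagnetic phases). If $T\ge T_c$, then $F$ has exactly one fixed point in $M_1$. If $T<T_c$, then $F$ has exactly three fixed points in $M_1$ when $b^3\sqrt{\nu_1}<a^{-1}<b^3\sqrt{\nu_2}$, and exactly two when $a^{-1}=b^3\sqrt{\nu_1}$ or $a^{-1}=b^3\sqrt{\nu_2}$, where $$\nu_i=\frac{1}{y_i}\left(\frac{1+y_i}{b^4+y_i}\right)^2,\quad i=1,2,$$ and $y_1<y_2$ are the two positive roots of $y^2+(3-b^4)y+b^4=0$.
   Context: $F:\mathbb{R}^4_+\to\mathbb{R}^4_+$ (positive coordinates) is $F(u)=(u_1',u_2',u_3',u_4')$ with $u_1'=a(bu_1+b^{-1}u_2)^2$, $u_2'=a^{-1}(bu_3+b^{-1}u_4)^2$, $u_3'=a^{-1}(b^{-1}u_1+bu_2)^2$, $u_4'=a(b^{-1}u_3+bu_4)^2$. $M_1=\{u\in\mathbb{R}^4_+:\ u_1=u_4,\ u_2=u_3\}$. This map is the recurrence for the partition functions of the Ising model on the Cayley tree of order 2 with nearest-neighbour coupling $J_1$ and prolonged next-nearest-neighbour coupling $J_2$ at inverse temperature $\beta$. *)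

(* Defs.v *)
From Stdlib Require Import Reals List.
Open Scope R_scope.

Record quad : Type := mkQ { q1 : R; q2 : R; q3 : R; q4 : R }.

Definition pos4 (u : quad) : Prop :=
  0 < q1 u /\ 0 < q2 u /\ 0 < q3 u /\ 0 < q4 u.

Definition F (a b : R) (u : quad) : quad :=
  mkQ (a * (b * q1 u + / b * q2 u) ^ 2)
      (/ a * (b * q3 u + / b * q4 u) ^ 2)
      (/ a * (/ b * q1 u + b * q2 u) ^ 2)
      (a * (/ b * q3 u + b * q4 u) ^ 2).

Definition M1 (u : quad) : Prop := pos4 u /\ q1 u = q4 u /\ q2 u = q3 u.

Definition para_fixed (a b : R) (u : quad) : Prop := M1 u /\ F a b u = u.

Definition has_exactly (n : nat) (P : quad -> Prop) : Prop :=
  exists l : list quad, NoDup l /\ length l = n /\ (forall u, In u l <-> P u).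

Definition nu (b y : R) : R := / y * ((1 + y) / (b ^ 4 + y)) ^ 2.

(* Main.v *)
Require Import Defs.
From Stdlib Require Import Reals List Lra Psatz.
Open Scope R_scope.

Definition pc (a b s : R) := s^3 - a*b^2*s^2 + b^2*s - a.
Definition zf (a b s : R) := a / (s^2/b + b)^2.
Definition phi (a b s : R) := mkQ (s^2 * zf a b s) (zf a b s) (zf a b s) (s^2 * zf a b s).

Lemma zf_pos a b s : 0 < a -> 0 < b -> 0 <= s -> 0 < zf a b s.
Proof.
  intros. unfold zf. apply Rdiv_lt_0_compat; auto.
  assert (0 < s^2/b + b). { assert (0 <= s^2/b) by (unfold Rdiv; apply Rmult_le_pos; [nra | left; apply Rinv_0_lt_compat; lra]). lra. }
  nra.
Qed.

Lemma phi_fixed a b s : 0 < a -> 0 < b -> 0 < s -> pc a b s = 0 -> para_fixed a b (phi a b s).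
Proof.
  intros Ha Hb Hs Hp.
  assert (HD : 0 < b^2*s^2 + 1) by nra.
  assert (Ha' : a = (s^3 + b^2*s)/(b^2*s^2+1)).
  { unfold pc in Hp. field_simplify_eq; nra. }
  assert (Hz := zf_pos a b s Ha Hb (Rlt_le _ _ Hs)).
  split.
  - assert (Hx : 0 < s^2 * zf a b s) by (apply Rmult_lt_0_compat; nra).
    unfold M1, pos4, phi; cbn [q1 q2 q3 q4]. repeat split; try exact Hx; try exact Hz.
  - unfold F, phi, zf; simpl. subst a.
    assert (0 < s^2 + b^2) by nra.
    f_equal; field; repeat split; try lra; nra.
Qed.

Lemma fixed_phi a b u : 0 < a -> 0 < b -> para_fixed a b u ->
  exists s, 0 < s /\ pc a b s = 0 /\ u = phi a b s.
Proof.
  intros Ha Hb [[[P1 [P2 [P3 P4]]] [E14 E23]] Hf].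
  destruct u as [x z z' x']. cbn [q1 q2 q3 q4] in *. subst x' z'.
  assert (H1 := f_equal q1 Hf). assert (H2 := f_equal q2 Hf).
  unfold F in H1, H2; cbn [q1 q2 q3 q4] in H1, H2.
  set (s := sqrt (x / z)).
  assert (Hs : 0 < s) by (apply sqrt_lt_R0; apply Rdiv_lt_0_compat; lra).
  assert (Hss : s * s = x / z) by (apply sqrt_sqrt; left; apply Rdiv_lt_0_compat; lra).
  assert (Hx : x = s^2 * z) by (simpl; rewrite Rmult_1_r, Hss; field; lra).
  clearbody s. subst x.
  set (E := s^2/b + b).
  assert (HE : 0 < E) by (unfold E; assert (0 < s^2/b) by (apply Rdiv_lt_0_compat; nra); lra).
  assert (Hz : z * E^2 = a).
  { replace (b * z + / b * (s^2 * z)) with (z * E) in H2 by (unfold E; field; lra).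
    apply (f_equal (Rmult a)) in H2.
    replace (a * (/ a * (z * E) ^ 2)) with (z * (z * E^2)) in H2 by (field; lra).
    apply Rmult_eq_reg_l with z; lra. }
  set (G := b * s^2 + / b).
  assert (HG : 0 < G) by (unfold G; assert (0 < /b) by (apply Rinv_0_lt_compat; lra); nra).
  assert (H1' : (z * E * G)^2 = s^2).
  { replace (b * (s^2 * z) + / b * z) with (z * G) in H1 by (unfold G; field; lra).
    rewrite <- Hz in H1.
    apply Rmult_eq_reg_l with z; [|lra].
    transitivity (s^2 * z); [rewrite <- H1; ring | ring]. }
  assert (H3 : z * E * G = s).
  { assert (0 < z * E * G) by (apply Rmult_lt_0_compat; [apply Rmult_lt_0_compat|]; lra).
    nra. }
  exists s. split; [exact Hs|]. split.
  - unfold pc. rewrite <- Hz.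
    transitivity (b*E*(s - z*E*G)).
    + unfold E, G. field. lra.
    + rewrite H3. ring.
  - unfold phi. assert (Hzf : zf a b s = z) by (unfold zf; rewrite <- Hz; fold E; field; lra).
    rewrite Hzf. reflexivity.
Qed.

Lemma phi_inj a b s t : 0 < a -> 0 < b -> 0 < s -> 0 < t -> phi a b s = phi a b t -> s = t.
Proof.
  intros Ha Hb Hs Ht H.
  assert (H1 := f_equal q1 H). assert (H2 := f_equal q2 H).
  cbn [phi q1 q2] in H1, H2. rewrite H2 in H1.
  assert (Hz := zf_pos a b t Ha Hb (Rlt_le _ _ Ht)).
  apply Rmult_eq_reg_r in H1; [|lra]. nra.
Qed.

Lemma nodup_map_phi a b l : 0 < a -> 0 < b -> NoDup l -> (forall s, In s l -> 0 < s) ->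
  NoDup (map (phi a b) l).
Proof.
  intros Ha Hb Hl. induction Hl as [|x l Hx Hl IH]; intros Hpos; simpl; constructor.
  - intros Hin. apply in_map_iff in Hin. destruct Hin as [y [Hy Hin]].
    apply phi_inj in Hy; auto. subst. contradiction.
    apply Hpos; simpl; auto. apply Hpos; simpl; auto.
  - apply IH. intros; apply Hpos; simpl; auto.
Qed.

Lemma transfer a b l : 0 < a -> 0 < b -> NoDup l ->
  (forall s, In s l -> 0 < s /\ pc a b s = 0) ->
  (forall s, 0 < s -> pc a b s = 0 -> In s l) ->
  has_exactly (length l) (para_fixed a b).
Proof.
  intros Ha Hb Hl H1 H2. exists (map (phi a b) l). split; [|split].
  - apply nodup_map_phi; auto. intros s Hs; apply H1; auto.
  - apply length_map.
  - intros u; split.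
    + intros Hin. apply in_map_iff in Hin. destruct Hin as [s [<- Hs]].
      destruct (H1 s Hs). apply phi_fixed; auto.
    + intros Hu. destruct (fixed_phi a b u Ha Hb Hu) as [s [Hs [Hp ->]]].
      apply in_map. auto.
Qed.

Lemma pc_cont a b : continuity (pc a b).
Proof. unfold pc. reg. Qed.

Lemma pc_big a b c : 0 < a -> 0 < b -> 0 <= c -> 0 < pc a b (c + a*b^2 + a + 1).
Proof.
  intros Ha Hb Hc. unfold pc. set (M := c + a*b^2 + a + 1).
  assert (HM1 : 1 <= M) by (unfold M; nra).
  assert (HM2 : a + 1 <= M - a*b^2) by (unfold M; lra).
  replace (M^3 - a*b^2*M^2 + b^2*M - a) with (M^2*(M - a*b^2) + b^2*M - a) by ring.
  assert (M^2 >= 1) by nra. assert (M^2*(M-a*b^2) >= a+1) by nra. nra.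
Qed.

Lemma pc0 a b : 0 < a -> pc a b 0 < 0.
Proof. intros; unfold pc; simpl; lra. Qed.

Lemma quad_nonneg B u : 1 <= B <= 3 -> 0 <= u -> 0 <= B*u^2 + (3 - B^2)*u + B.
Proof.
  intros HB Hu.
  assert (K : 0 <= (B+3)*(B-1)*(3-B)*(B+1)).
  { apply Rmult_le_pos; [apply Rmult_le_pos; [apply Rmult_le_pos|]|]; lra. }
  assert (4*B*(B*u^2 + (3 - B^2)*u + B) = (2*B*u + 3 - B^2)^2 + (B+3)*(B-1)*(3-B)*(B+1)) by ring.
  assert (0 <= (2*B*u + 3 - B^2)^2) by (apply pow2_ge_0).
  assert (0 <= 4*B*(B*u^2 + (3 - B^2)*u + B)) by lra.
  apply Rmult_le_reg_l with (4*B); lra.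
Qed.

Lemma uniq1 a b s t : 0 < a -> 0 < b -> 1 <= b^2 <= 3 -> 0 < s -> 0 < t ->
  pc a b s = 0 -> pc a b t = 0 -> s = t.
Proof.
  intros Ha Hb HB Hs Ht Ps Pt.
  destruct (Req_dec s t) as [|Hne]; auto. exfalso.
  set (Q := b^2*s^2*t^2 + s^2 + t^2 + (1-b^4)*s*t + b^2).
  assert (Hid : (s-t)*Q = (s^3+b^2*s)*(b^2*t^2+1) - (t^3+b^2*t)*(b^2*s^2+1)) by (unfold Q; ring).
  assert (Ns : s^3+b^2*s = a*(b^2*s^2+1)) by (unfold pc in Ps; lra).
  assert (Nt : t^3+b^2*t = a*(b^2*t^2+1)) by (unfold pc in Pt; lra).
  rewrite Ns, Nt in Hid.
  assert (HQ : 0 < Q).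
  { assert (Hq := quad_nonneg (b^2) (s*t) HB ltac:(nra)).
    assert (Q = (s-t)^2 + (b^2*(s*t)^2 + (3 - (b^2)^2)*(s*t) + b^2)) by (unfold Q; ring).
    assert (0 < (s-t)^2). { assert (s - t <> 0) by lra. apply pow2_gt_0 || nra. }
    lra. }
  assert ((s-t)*Q = 0) by (rewrite Hid; ring).
  apply Rmult_integral in H. destruct H; lra.
Qed.

Lemma case1 a b : 0 < a -> 0 < b -> 1 <= b^2 <= 3 -> has_exactly 1 (para_fixed a b).
Proof.
  intros Ha Hb HB.
  destruct (IVT (pc a b) 0 (0 + a*b^2 + a + 1) (pc_cont a b) ltac:(nra) (pc0 a b Ha)
     (pc_big a b 0 Ha Hb (Rle_refl 0))) as [r [[Hr0 _] Hr]].
  assert (Hr' : 0 < r).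
  { destruct Hr0 as [|E]; auto. subst r. pose proof (pc0 a b Ha). lra. }
  change 1%nat with (length (r :: nil)).
  apply transfer; auto.
  - constructor; [simpl; tauto | constructor].
  - intros s [<-|[]]; auto.
  - intros s Hs Hp. left. symmetry. apply (uniq1 a b); auto.
Qed.

Definition qq a b u v := u^2 + u*v + v^2 - a*b^2*(u+v) + b^2.

Lemma qq_of a b u v : pc a b u = 0 -> pc a b v = 0 -> u <> v -> qq a b u v = 0.
Proof.
  intros Hu Hv Hne.
  assert (H : (u - v) * qq a b u v = 0).
  { transitivity (pc a b u - pc a b v); [unfold pc, qq; ring | lra]. }
  apply Rmult_integral in H. destruct H; lra.
Qed.

Lemma cubic3 a b r1 r2 r3 x : pc a b r1 = 0 -> pc a b r2 = 0 -> pc a b r3 = 0 -> pc a b x = 0 ->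
  r1 <> r2 -> r1 <> r3 -> r2 <> r3 -> x = r1 \/ x = r2 \/ x = r3.
Proof.
  intros P1 P2 P3 Px N12 N13 N23.
  destruct (Req_dec x r1); auto. destruct (Req_dec x r2); auto. destruct (Req_dec x r3); auto.
  exfalso.
  assert (A2 := qq_of a b r1 r2 P1 P2 N12).
  assert (A3 := qq_of a b r1 r3 P1 P3 N13).
  assert (Ax := qq_of a b r1 x P1 Px ltac:(lra)).
  assert (S3 : (r2 - r3) * (r1 + r2 + r3 - a*b^2) = 0) by (transitivity (qq a b r1 r2 - qq a b r1 r3); [unfold qq; ring | lra]).
  assert (Sx : (r2 - x) * (r1 + r2 + x - a*b^2) = 0) by (transitivity (qq a b r1 r2 - qq a b r1 x); [unfold qq; ring | lra]).
  apply Rmult_integral in S3. apply Rmult_integral in Sx.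
  destruct S3; destruct Sx; lra.
Qed.

Lemma ncont a b : continuity (fun x => - pc a b x).
Proof. unfold pc. reg. Qed.

Lemma three_roots a b s1 s2 : 0 < a -> 0 < b -> 0 < s1 -> s1 < s2 ->
  0 < pc a b s1 -> pc a b s2 < 0 -> has_exactly 3 (para_fixed a b).
Proof.
  intros Ha Hb H1 H12 P1 P2.
  destruct (IVT (pc a b) 0 s1 (pc_cont a b) H1 (pc0 a b Ha) P1) as [r1 [[A1 B1] R1]].
  destruct (IVT (fun x => - pc a b x) s1 s2 (ncont a b) H12 ltac:(lra) ltac:(lra)) as [r2 [[A2 B2] R2]].
  assert (R2' : pc a b r2 = 0) by lra.
  assert (HM : s2 < s2 + a*b^2 + a + 1) by nra.
  destruct (IVT (pc a b) s2 _ (pc_cont a b) HM ltac:(lra) (pc_big a b s2 Ha Hb ltac:(lra))) as [r3 [[A3 B3] R3]].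
  assert (Hp0 := pc0 a b Ha).
  assert (r1 <> 0) by (intro; subst; lra).
  assert (r1 <> s1) by (intro; subst; lra).
  assert (r2 <> s1) by (intro; subst; lra).
  assert (r2 <> s2) by (intro; subst; lra).
  assert (r3 <> s2) by (intro; subst; lra).
  change 3%nat with (length (r1 :: r2 :: r3 :: nil)).
  apply transfer; auto.
  - constructor; [simpl; lra|]. constructor; [simpl; lra|]. constructor; [simpl; tauto|constructor].
  - intros s [<-|[<-|[<-|[]]]]; split; auto; lra.
  - intros s Hs Hp. destruct (cubic3 a b r1 r2 r3 s R1 R2' R3 Hp ltac:(lra) ltac:(lra) ltac:(lra)) as [E|[E|E]]; subst s; simpl; tauto.
Qed.

Lemma two_roots a b s0 : 0 < a -> 0 < b -> b^2 <> 3 -> 0 < s0 -> pc a b s0 = 0 ->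
  3*s0^2 - 2*a*b^2*s0 + b^2 = 0 -> has_exactly 2 (para_fixed a b).
Proof.
  intros Ha Hb HB Hs P D1.
  set (r := a*b^2 - 2*s0).
  assert (Hid : forall x, pc a b x = (x - s0)^2*(x - r) + x*(3*s0^2 - 2*a*b^2*s0 + b^2)
            + pc a b s0 - s0*(3*s0^2 - 2*a*b^2*s0 + b^2)).
  { intros x. unfold pc, r. ring. }
  assert (Hra : s0^2 * r = a).
  { assert (H0 := Hid 0). rewrite P, D1 in H0. unfold pc in H0. simpl in H0 |- *. lra. }
  assert (Hr : 0 < r).
  { destruct (Rlt_or_le 0 r); auto. assert (s0^2*r <= 0) by nra. lra. }
  assert (Hne : r <> s0).
  { intro E. assert (Ha3 : a = s0^3) by (rewrite <- Hra, E; ring).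
    assert (Hb2 : b^2 = 3*s0^2).
    { unfold r in E. assert (a*b^2 = 3*s0) by lra. nra. }
    assert (a*b^2 = 3*s0) by (unfold r in E; lra).
    rewrite Ha3, Hb2 in H.
    assert (s0^4 = 1).
    { apply Rmult_eq_reg_l with (3*s0); [|lra]. transitivity (s0^3*(3*s0^2)); [ring|]. rewrite H. ring. }
    assert (s0^2 = 1).
    { assert ((s0^2 - 1)*(s0^2+1) = 0) by (transitivity (s0^4 - 1); [ring | lra]).
      apply Rmult_integral in H1. destruct H1; nra. }
    apply HB. lra. }
  change 2%nat with (length (s0 :: r :: nil)).
  apply transfer; auto.
  - constructor; [simpl; lra|]. constructor; [simpl; tauto|constructor].
  - intros s [E|[E|[]]]; subst s; split; auto.
    rewrite Hid, P, D1. ring.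
  - intros s Hs' Hp. rewrite Hid, P, D1 in Hp.
    assert ((s - s0)^2*(s - r) = 0) by lra.
    apply Rmult_integral in H. destruct H as [H|H].
    + left. symmetry. assert (s - s0 = 0) by nra. lra.
    + right; left. lra.
Qed.

Lemma nu_rel b y : 0 < b -> 0 < y ->
  b^3 * sqrt (nu b y) = (b^2*(sqrt y / b)^2+1)/((sqrt y / b)^3+b^2*(sqrt y / b)).
Proof.
  intros Hb Hy.
  assert (Hw : 0 < sqrt y) by (apply sqrt_lt_R0; lra).
  assert (Hww : sqrt y * sqrt y = y) by (apply sqrt_sqrt; lra).
  set (w := sqrt y) in *. clearbody w. subst y.
  assert (HK : 0 <= (1 + w*w)/(w*(b^4 + w*w))).
  { left. apply Rdiv_lt_0_compat; [nra|]. apply Rmult_lt_0_compat; [lra|]. nra. }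
  assert (nu b (w*w) = ((1 + w*w)/(w*(b^4 + w*w))) * ((1 + w*w)/(w*(b^4 + w*w)))).
  { unfold nu. assert (0 < b^4 + w*w) by nra. field. split; lra. }
  rewrite H, sqrt_square by exact HK.
  assert (0 < b^4 + w*w) by nra. assert (0 < w^3) by (apply pow_lt; lra). assert (0 < b^3) by (apply pow_lt; lra). assert (0 < b*w*b^3) by (repeat apply Rmult_lt_0_compat; lra). field. repeat split; lra.
Qed.

Lemma deriv0 a b y : 0 < b -> 0 < y -> y^2 + (3 - b^4)*y + b^4 = 0 ->
  a*(b^2*(sqrt y / b)^2+1) = (sqrt y / b)^3+b^2*(sqrt y / b) ->
  3*(sqrt y / b)^2 - 2*a*b^2*(sqrt y / b) + b^2 = 0.
Proof.
  intros Hb Hy Hq HaD.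
  assert (Hw : 0 < sqrt y) by (apply sqrt_lt_R0; lra).
  assert (Hww : sqrt y * sqrt y = y) by (apply sqrt_sqrt; lra).
  set (w := sqrt y) in *. clearbody w. subst y.
  set (s := w / b) in *.
  assert (HD : 0 < b^2*s^2+1) by nra.
  apply Rmult_eq_reg_l with (b^2*s^2+1); [|lra].
  transitivity (3*s^2*(b^2*s^2+1) - 2*b^2*s*(a*(b^2*s^2+1)) + b^2*(b^2*s^2+1)); [ring|].
  rewrite HaD. unfold s.
  transitivity (((w*w)^2 + (3 - b^4)*(w*w) + b^4)/b^2); [field; lra|].
  rewrite Hq. field. lra.
Qed.

Lemma sign_gt a b s : 0 < a -> 0 < b -> 0 < s ->
  (b^2*s^2+1)/(s^3+b^2*s) < / a -> 0 < pc a b s.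
Proof.
  intros Ha Hb Hs H.
  assert (HN : 0 < s^3+b^2*s) by (assert (0 < s^3) by (apply pow_lt; lra); nra).
  apply (Rmult_lt_compat_l (a*(s^3+b^2*s))) in H; [|nra].
  replace (a*(s^3+b^2*s)*((b^2*s^2+1)/(s^3+b^2*s))) with (a*(b^2*s^2+1)) in H by (field; lra).
  replace (a*(s^3+b^2*s)*/a) with (s^3+b^2*s) in H by (field; lra).
  unfold pc. lra.
Qed.

Lemma sign_lt a b s : 0 < a -> 0 < b -> 0 < s ->
  / a < (b^2*s^2+1)/(s^3+b^2*s) -> pc a b s < 0.
Proof.
  intros Ha Hb Hs H.
  assert (HN : 0 < s^3+b^2*s) by (assert (0 < s^3) by (apply pow_lt; lra); nra).
  apply (Rmult_lt_compat_l (a*(s^3+b^2*s))) in H; [|nra].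
  replace (a*(s^3+b^2*s)*((b^2*s^2+1)/(s^3+b^2*s))) with (a*(b^2*s^2+1)) in H by (field; lra).
  replace (a*(s^3+b^2*s)*/a) with (s^3+b^2*s) in H by (field; lra).
  unfold pc. lra.
Qed.

Lemma sign_eq a b s : 0 < a -> 0 < b -> 0 < s ->
  / a = (b^2*s^2+1)/(s^3+b^2*s) -> a*(b^2*s^2+1) = s^3+b^2*s.
Proof.
  intros Ha Hb Hs H.
  assert (HN : 0 < s^3+b^2*s) by (assert (0 < s^3) by (apply pow_lt; lra); nra).
  apply (f_equal (Rmult (a*(s^3+b^2*s)))) in H.
  replace (a*(s^3+b^2*s)*((b^2*s^2+1)/(s^3+b^2*s))) with (a*(b^2*s^2+1)) in H by (field; lra).
  replace (a*(s^3+b^2*s)*/a) with (s^3+b^2*s) in H by (field; lra).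
  lra.
Qed.

Lemma dbl_case a b y : 0 < a -> 0 < b -> b^2 <> 3 -> 0 < y -> y^2 + (3 - b^4)*y + b^4 = 0 ->
  / a = b^3 * sqrt (nu b y) -> has_exactly 2 (para_fixed a b).
Proof.
  intros Ha Hb HB Hy Hq He.
  rewrite nu_rel in He by auto.
  assert (Hs : 0 < sqrt y / b) by (apply Rdiv_lt_0_compat; [apply sqrt_lt_R0|]; lra).
  assert (HaD := sign_eq a b _ Ha Hb Hs He).
  apply (two_roots a b (sqrt y / b)); auto.
  - unfold pc. lra.
  - apply deriv0; auto.
Qed.

Theorem theorem1 (J1 J2 T : R) (hJ2 : 0 < J2) (hT : 0 < T) :
  let beta := / T in
  let a := exp (J1 * beta) in
  let b := exp (J2 * beta) in
  let Tc := 2 * J2 / ln 3 in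
  (Tc <= T -> has_exactly 1 (para_fixed a b)) /\
  (T < Tc ->
   forall y1 y2 : R,
     0 < y1 -> y1 < y2 ->
     y1 ^ 2 + (3 - b ^ 4) * y1 + b ^ 4 = 0 ->
     y2 ^ 2 + (3 - b ^ 4) * y2 + b ^ 4 = 0 ->
     (b ^ 3 * sqrt (nu b y1) < / a < b ^ 3 * sqrt (nu b y2) ->
        has_exactly 3 (para_fixed a b)) /\
     ((/ a = b ^ 3 * sqrt (nu b y1) \/ / a = b ^ 3 * sqrt (nu b y2)) ->
        has_exactly 2 (para_fixed a b))).
Proof.
  intros beta a b Tc.
  assert (Ha : 0 < a) by apply exp_pos.
  assert (Hbeta : 0 < beta) by (apply Rinv_0_lt_compat; lra).
  assert (Hb1 : 1 < b).
  { unfold b. rewrite <- exp_0. apply exp_increasing. nra. }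
  assert (Hb : 0 < b) by lra.
  split.
  - intros HT. apply case1; auto. split; [nra|].
    assert (Hl3 : 0 < ln 3) by (rewrite <- ln_1; apply ln_increasing; lra).
    assert (Hb2 : b^2 = exp (2*J2*beta)).
    { unfold b. replace (2*J2*beta) with (J2*beta + J2*beta) by ring. rewrite exp_plus. ring. }
    assert (Hle : 2*J2*beta <= ln 3).
    { unfold Tc in HT. unfold beta.
      apply Rmult_le_compat_r with (r := ln 3 * / T) in HT; [|left; apply Rmult_lt_0_compat; [|apply Rinv_0_lt_compat]; lra].
      replace (2 * J2 / ln 3 * (ln 3 * / T)) with (2*J2*/T) in HT by (field; lra).
      replace (T * (ln 3 * / T)) with (ln 3) in HT by (field; lra). lra. }
    rewrite Hb2. destruct Hle as [Hlt|Heq].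
    + left. rewrite <- (exp_ln 3) by lra. apply exp_increasing; auto.
    + right. rewrite Heq. apply exp_ln. lra.
  - intros _ y1 y2 Hy1 H12 Q1 Q2.
    assert (Hy2 : 0 < y2) by lra.
    assert (HB : b^2 <> 3).
    { intro E. assert (E4 : b^4 = 9) by (replace (b^4) with ((b^2)^2) by ring; rewrite E; ring).
      rewrite E4 in Q1, Q2.
      assert ((y1-3)^2 = 0) by (rewrite <- Q1; ring).
      assert ((y2-3)^2 = 0) by (rewrite <- Q2; ring).
      assert (y1 - 3 = 0) by nra. assert (y2 - 3 = 0) by nra. lra. }
    split.
    + intros [L U].
      rewrite nu_rel in L, U by auto.
      assert (Hw1 : 0 < sqrt y1) by (apply sqrt_lt_R0; lra).
      assert (Hw2 : 0 < sqrt y2) by (apply sqrt_lt_R0; lra).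
      assert (Hww1 : sqrt y1 * sqrt y1 = y1) by (apply sqrt_sqrt; lra).
      assert (Hww2 : sqrt y2 * sqrt y2 = y2) by (apply sqrt_sqrt; lra).
      assert (Hw12 : sqrt y1 < sqrt y2) by nra.
      assert (Hs1 : 0 < sqrt y1 / b) by (apply Rdiv_lt_0_compat; lra).
      assert (Hs12 : sqrt y1 / b < sqrt y2 / b) by (apply Rmult_lt_compat_r; [apply Rinv_0_lt_compat|]; lra).
      apply (three_roots a b (sqrt y1 / b) (sqrt y2 / b)); auto.
      * apply sign_gt; auto.
      * apply sign_lt; auto. lra.
    + intros [E|E]; [apply (dbl_case a b y1) | apply (dbl_case a b y2)]; auto.
Qed.
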